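(* Let $\mathscr{D}_1=\{C_{3,1},C_{3,2},C_{3,3},C_{4,1},C_{4,2},C_{4,3},C_{5,1},C_{5,2},C_{5,3}\}$ and $\mathscr{D}_2=\{C_3,C_4,C_5\}$. Let $\mathscr{F}$ be the family of all graphs $G$ obtained as follows: take a single vertex $v$, graphs $A_1,\dots,A_t\in\mathscr{D}_1$ and graphs $B_1,\dots,B_s\in\mathscr{D}_2$, where $s,t\geq 0$ and $s+t\geq 2$ (all these graphs vertex-disjoint), and identify the leaf of each $A_i$ and one vertex of each $B_j$ with $v$. Let $G_4$ be the graph in $\mathscr{F}$ obtained with one gadget $C_4$ and one gadget $C_{4,1}$ (explicitly: vertices $a,a_1,a_2,a_3,b_1,b_2,b_3,b_4$ and edges $aa_1,aa_2,aa_3,a_2b_4,a_3b_4,a_1b_1,b_1b_2,b_2b_3,b_3a_1$), and let $G_5$ be the graph in $\mathscr{F}$ obtained with one gadget $C_4$ and one gadget $C_5$. If $G\in\mathscr{F}\setminus\{G_4,G_5\}$, then $\gamma^{d}_2(G)\leq \frac{|V(G)|}{3}$.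
   Context: All graphs are finite and simple. A set $S$ of vertices of a graph $G$ is a disjunctive dominating set of $G$ if every vertex not in $S$ is adjacent to a vertex of $S$ or has at least two vertices of $S$ at distance exactly $2$ from it in $G$. The disjunctive domination number $\gamma^{d}_2(G)$ is the minimum cardinality of a disjunctive dominating set of $G$. $C_n$ denotes the cycle on $n$ vertices. For $s\geq 3$ and $t\geq 1$, $C_{s,t}$ denotes the graph obtained from a cycle $C_s$ and a path with $t$ edges by identifying one end vertex of the path with a vertex of the cycle; the other end vertex of the path (a vertex of degree $1$) is called the leaf of $C_{s,t}$. Thus $C_{s,t}$ has $s+t$ vertices. *)

(* Defs.v *)
From mathcomp Require Import all_boot.
Set Implicit Arguments. Unset Strict Implicit. Unset Printing Implicit Defensive.

(* A graph is given by an adjacency relation e : rel T (intended symmetric,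
   irreflexive). *)

Definition dist2 (T : finType) (e : rel T) (x y : T) : bool :=
  [&& x != y, ~~ e x y & [exists z, e x z && e z y]].

Definition disj_domb (T : finType) (e : rel T) (S : {set T}) : bool :=
  [forall x, (x \notin S) ==>
     ([exists y in S, e x y] || (2 <= #|[set y in S | dist2 e x y]|))].

(* gamma^d_2 : minimum cardinality of a disjunctive dominating set
   (setT is always one, so #|T| is a valid default). *)
Definition gamma_d2 (T : finType) (e : rel T) : nat :=
  \big[minn/#|T|]_(S : {set T} | disj_domb e S) #|S|.

(* A gadget is a pair (s, t) : nat * nat, on local vertices 0 .. s+t-1:
   cycle 0 - 1 - ... - (s-1) - 0, and path 0 - s - (s+1) - ... - (s+t-1).
   The vertex identified with v (its root) is the leaf s+t-1 if t >= 1,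
   and vertex 0 if t = 0 (a plain cycle C_s). *)
Definition gsz (g : nat * nat) : nat := g.1 + g.2.
Definition groot (g : nat * nat) : nat := if g.2 == 0 then 0 else g.1 + g.2 - 1.

Definition cyc_edge (s a b : nat) : bool :=
  [&& a < s, b < s & (b == (a.+1 %% s)) || (a == (b.+1 %% s))].
Definition path_edge1 (s t a b : nat) : bool :=
  (((a == 0) && (b == s)) || ((s <= a) && (b == a.+1))) && (b < s + t).
Definition gedge (g : nat * nat) (a b : nat) : bool :=
  [|| cyc_edge g.1 a b, path_edge1 g.1 g.2 a b | path_edge1 g.1 g.2 b a].

(* Vertex None is v; vertex Some (i; j) is the j-th non-root vertex of the
   i-th gadget, i.e. local vertex (bump (root) j). *)
Definition gadgets_vert (L : seq (nat * nat)) : finType :=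
  option {i : 'I_(size L) & 'I_((gsz (nth (0, 0) L i)).-1)}.

Definition gadgets_adj (L : seq (nat * nat)) : rel (gadgets_vert L) :=
  fun x y =>
    match x, y with
    | None, None => false
    | None, Some u =>
        let g := nth (0, 0) L (tag u) in gedge g (groot g) (bump (groot g) (tagged u))
    | Some u, None =>
        let g := nth (0, 0) L (tag u) in gedge g (bump (groot g) (tagged u)) (groot g)
    | Some u, Some w =>
        let g := nth (0, 0) L (tag u) in
        ((tag u : nat) == tag w) &&
          gedge g (bump (groot g) (tagged u)) (bump (groot g) (tagged w))
    end.

Arguments gadgets_adj : clear implicits.

Definition in_D1 (g : nat * nat) : bool := (3 <= g.1 <= 5) && (1 <= g.2 <= 3).
Definition in_D2 (g : nat * nat) : bool := (3 <= g.1 <= 5) && (g.2 == 0).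

Definition F_list (L : seq (nat * nat)) : bool :=
  all (fun g => in_D1 g || in_D2 g) L && (2 <= size L).

Definition G4_list : seq (nat * nat) := [:: (4, 0); (4, 1)].
Definition G5_list : seq (nat * nat) := [:: (4, 0); (5, 0)].

(* Main.v *)
Require Import Defs.
From mathcomp Require Import all_boot zify.
Set Implicit Arguments. Unset Strict Implicit.

Definition ldist2 (g : nat * nat) (a b : nat) : bool :=
  [&& a != b, ~~ gedge g a b & has (fun z => gedge g a z && gedge g z b) (iota 0 (gsz g))].
Definition lcnt g Ls (vS : bool) x := count (ldist2 g x) Ls + (vS && ldist2 g x (groot g)).
Definition lcheck (g : nat * nat) (Ls : seq nat) (vS ext : bool) : bool :=
  [&& groot g < gsz g, all (fun a => ~~ gedge g a a) (iota 0 (gsz g)),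
      uniq Ls, all (fun y => (y < gsz g) && (y != groot g)) Ls &
  all (fun x => [|| x == groot g, x \in Ls, has (gedge g x) Ls, vS && gedge g x (groot g),
        2 <= lcnt g Ls vS x |
        [&& ext, gedge g x (groot g) & 1 <= lcnt g Ls vS x]]) (iota 0 (gsz g))].
Definition adjv g (Ls : seq nat) := has (gedge g (groot g)) Ls.
Definition wit g (Ls : seq nat) := has (ldist2 g (groot g)) Ls.
Definition all12 : seq (nat*nat) :=
  [:: (3,0);(4,0);(5,0);(3,1);(3,2);(3,3);(4,1);(4,2);(4,3);(5,1);(5,2);(5,3)].
Definition chP (g : nat * nat) : seq nat :=
  match g with
  | (3,0) => [::] | (4,0) => [:: 2] | (5,0) => [:: 2]
  | (3,1) => [:: 0] | (3,2) => [:: 0] | (3,3) => [:: 0]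
  | (4,1) => [:: 2] | (4,2) => [:: 2] | (4,3) => [:: 2; 4]
  | (5,1) => [:: 2] | (5,2) => [:: 1; 4] | (5,3) => [:: 5; 2]
  | _ => [::] end.
Definition chQ (g : nat * nat) : seq nat :=
  match g with
  | (3,0) => [:: 1] | (4,0) => [:: 1] | (5,0) => [:: 2]
  | (3,1) => [:: 0] | (3,2) => [:: 0] | (3,3) => [:: 0; 4]
  | (4,1) => [:: 2] | (4,2) => [:: 2; 4] | (4,3) => [:: 2; 5]
  | (5,1) => [:: 2; 0] | (5,2) => [:: 5; 2] | (5,3) => [:: 5; 2]
  | _ => [::] end.
Definition chR (g : nat * nat) : seq nat := if g == (4,0) then [:: 2] else chQ g.
Definition mm g := (gsz g).-1.
Definition dP g := mm g - 3 * size (chP g).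
Definition ok2 vS (ch : nat*nat -> seq nat) g1 g2 :=
  [&& lcheck g1 (ch g1) vS (adjv g2 (ch g2)), lcheck g2 (ch g2) vS (adjv g1 (ch g1)),
      vS || adjv g1 (ch g1) || adjv g2 (ch g2) || (wit g1 (ch g1) && wit g2 (ch g2)) &
      3 * (vS + size (ch g1) + size (ch g2)) <= 1 + mm g1 + mm g2].
Definition gvT (L : seq (nat*nat)) := {i : 'I_(size L) & 'I_((gsz (nth (0, 0) L i)).-1)}.

Definition gv (L : seq (nat*nat)) (i : 'I_(size L)) (z : nat) : gadgets_vert L :=
  if z == groot (nth (0,0) L i) then None else
  match (insub (unbump (groot (nth (0,0) L i)) z) : option 'I_((gsz (nth (0, 0) L i)).-1)) with
  | Some j => Some (existT (fun i : 'I_(size L) => 'I_((gsz (nth (0, 0) L i)).-1)) i j)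
  | None => None end.

Lemma unbump_lt r n z : r < n -> z < n -> z != r -> unbump r z < n.-1.
Proof.
rewrite /unbump => rn zn zr; move/eqP: zr => zr.
case: (ltnP r z) => h /=; lia.
Qed.

Lemma gv_some L (i : 'I_(size L)) z : groot (nth (0,0) L i) < gsz (nth (0,0) L i) -> z < gsz (nth (0,0) L i) ->
  z != groot (nth (0,0) L i) ->
  exists j : 'I_((gsz (nth (0, 0) L i)).-1),
    gv i z = Some (existT (fun i : 'I_(size L) => 'I_((gsz (nth (0, 0) L i)).-1)) i j)
    /\ bump (groot (nth (0,0) L i)) j = z.
Proof.
move=> rn zn zr; rewrite /gv (negbTE zr).
have lt := unbump_lt rn zn zr.
rewrite insubT /=; eexists; split; first reflexivity.
by rewrite /= unbumpK //= inE.
Qed.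

Lemma gv_root L (i : 'I_(size L)) : gv i (groot (nth (0,0) L i)) = None.
Proof. by rewrite /gv eqxx. Qed.

Lemma gv_bump L (u : gvT L) :
  gv (tag u) (bump (groot (nth (0,0) L (tag u))) (tagged u)) = Some u.
Proof.
case: u => i j /=; rewrite /gv eq_sym (negbTE (neq_bump _ _)) bumpK.
by rewrite (valK j).
Qed.

Lemma gv_adj L (i : 'I_(size L)) a b :
  let g := nth (0,0) L i in
  groot g < gsz g -> a < gsz g -> b < gsz g -> ~~ gedge g (groot g) (groot g) ->
  gadgets_adj L (gv i a) (gv i b) = gedge g a b.
Proof.
move=> g rn an bn irr.
case: (eqVneq a (groot g)) => [->|ar]; case: (eqVneq b (groot g)) => [->|br].
- by rewrite gv_root (negbTE irr).
- by rewrite gv_root; have [j [-> <-]] := gv_some rn bn br.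
- by rewrite gv_root; have [j [-> <-]] := gv_some rn an ar.
have [j [-> <-]] := gv_some rn an ar.
have [k [-> <-]] := gv_some rn bn br.
by rewrite /= eqxx.
Qed.

Lemma gv_inj L (i : 'I_(size L)) a b :
  let g := nth (0,0) L i in
  groot g < gsz g -> a < gsz g -> b < gsz g -> a != b -> gv i a != gv i b.
Proof.
move=> g rn an bn ab.
case: (eqVneq a (groot g)) => [ea|ar]; case: (eqVneq b (groot g)) => [eb|br].
- by rewrite ea eb eqxx in ab.
- by rewrite ea gv_root; have [j [-> _]] := gv_some rn bn br.
- by rewrite eb gv_root; have [j [-> _]] := gv_some rn an ar.
have [j [-> ja]] := gv_some rn an ar.
have [k [-> kb]] := gv_some rn bn br.
apply/eqP => /(congr1 (fun x : gadgets_vert L =>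
  if x is Some u then bump (groot (nth (0,0) L (tag u))) (tagged u) else 0)) /=.
by rewrite ja kb; apply/eqP.
Qed.

Definition Sset (L : seq (nat*nat)) (vS : bool) (ch : nat*nat -> seq nat) : {set gadgets_vert L} :=
  [set x : gadgets_vert L | if x is Some u then bump (groot (nth (0,0) L (tag u))) (tagged u) \in ch (nth (0,0) L (tag u))
           else vS].

Lemma gv_inS L vS ch (i : 'I_(size L)) y :
  let g := nth (0,0) L i in
  groot g < gsz g -> y < gsz g ->
  (gv i y \in Sset L vS ch) = if y == groot g then vS else y \in ch g.
Proof.
move=> g rn yn; case: (eqVneq y (groot g)) => [->|yr].
  by rewrite gv_root inE.
by have [j [-> <-]] := gv_some rn yn yr; rewrite inE.
Qed.

Lemma gv_dist2 L (i : 'I_(size L)) a b :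
  let g := nth (0,0) L i in
  groot g < gsz g -> a < gsz g -> b < gsz g -> ~~ gedge g (groot g) (groot g) ->
  ldist2 g a b -> dist2 (gadgets_adj L) (gv i a) (gv i b).
Proof.
move=> g rn an bn irr /and3P[ab nab /hasP[z]]; rewrite mem_iota add0n => /andP[_ zn] /andP[az zb].
apply/and3P; split; first exact: gv_inj.
  by rewrite gv_adj.
by apply/existsP; exists (gv i z); rewrite !gv_adj ?az.
Qed.

Lemma gv_cross L (i j : 'I_(size L)) a b :
  let g := nth (0,0) L i in let h := nth (0,0) L j in
  i != j -> groot g < gsz g -> a < gsz g -> a != groot g ->
  groot h < gsz h -> b < gsz h -> b != groot h ->
  gedge g a (groot g) -> gedge h (groot h) b ->
  dist2 (gadgets_adj L) (gv i a) (gv j b).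
Proof.
move=> g h ij rn an ar rn' bn br ea eb.
have [ka [-> ka']] := gv_some rn an ar.
have [kb [-> kb']] := gv_some rn' bn br.
apply/and3P; split.
- apply/eqP => /(congr1 (fun x : gadgets_vert L => if x is Some u then val (tag u) else 0)) /= /val_inj eij.
  by rewrite eij eqxx in ij.
- by apply/negP => /andP[/eqP /val_inj /= eij _]; rewrite eij eqxx in ij.
apply/existsP; exists None => /=.
by rewrite ka' kb' ea eb.
Qed.

Lemma two_count (T : eqType) (p : pred T) s : uniq s -> 2 <= count p s ->
  exists y1 y2, [/\ y1 \in s, y2 \in s, p y1, p y2 & y1 != y2].
Proof.
move=> us; rewrite -size_filter.
have := filter_uniq p us.
case E: (filter p s) => [|y1 [|y2 t]] //= /and3P[y1n _ _] _.
have m1 : y1 \in filter p s by rewrite E mem_head.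
have m2 : y2 \in filter p s by rewrite E !inE eqxx orbT.
rewrite mem_filter in m1; rewrite mem_filter in m2.
move/andP: m1 => [p1 s1]; move/andP: m2 => [p2 s2].
exists y1, y2; split => //.
by apply: contraNneq y1n => ->; rewrite mem_head.
Qed.

Lemma lcheck_mono g Ls vS (e e2 : bool) : lcheck g Ls vS e -> (e -> e2) -> lcheck g Ls vS e2.
Proof.
case: e => H ee; first by rewrite (ee isT).
move: H; rewrite /lcheck => /and5P[h1 h2 h3 h4 h5]; apply/and5P; split => //.
apply: sub_all h5 => x /=; rewrite orbF !orbA => ->; done.
Qed.

Definition lok g (Ls : seq nat) (vS : bool) a y :=
  [&& y < gsz g, (if y == groot g then vS else y \in Ls) & ldist2 g a y].

Lemma loc_wit1 g Ls vS a : groot g < gsz g -> all (fun y => (y < gsz g) && (y != groot g)) Ls ->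
  1 <= lcnt g Ls vS a -> exists y, lok g Ls vS a y.
Proof.
move=> rn /allP vld; rewrite /lcnt.
case E: (vS && ldist2 g a (groot g)).
  by move/andP: E => [vs d]; exists (groot g); rewrite /lok rn eqxx vs d.
rewrite addn0 -has_count => /hasP[y yL ay]; exists y.
by case/andP: (vld y yL) => yn yr; rewrite /lok yn (negbTE yr) yL ay.
Qed.

Lemma loc_wit2 g Ls vS a : groot g < gsz g -> all (fun y => (y < gsz g) && (y != groot g)) Ls ->
  uniq Ls -> 2 <= lcnt g Ls vS a -> exists y1 y2, [/\ lok g Ls vS a y1, lok g Ls vS a y2 & y1 != y2].
Proof.
move=> rn /allP vld uq; rewrite /lcnt.
case E: (vS && ldist2 g a (groot g)).
  move/andP: E => [vs d]; rewrite addn1 ltnS -has_count => /hasP[y yL ay].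
  case/andP: (vld y yL) => yn yr.
  exists (groot g), y; rewrite /lok rn eqxx vs d yn (negbTE yr) yL ay; split => //.
  by rewrite eq_sym.
rewrite addn0 => /(two_count uq) [y1 [y2 [y1L y2L a1 a2 ne]]].
exists y1, y2; split => //.
  by case/andP: (vld y1 y1L) => yn yr; rewrite /lok yn (negbTE yr) y1L a1.
by case/andP: (vld y2 y2L) => yn yr; rewrite /lok yn (negbTE yr) y2L a2.
Qed.

Lemma bump_lt r n (j : nat) : j < n.-1 -> bump r j < n.
Proof. case: n => [//|n] /=; rewrite /bump; case: (leqP r j) => /= _; lia. Qed.

Lemma gv_tagdiff L (i j : 'I_(size L)) a b :
  let g := nth (0,0) L i in let h := nth (0,0) L j in
  i != j -> groot g < gsz g -> a < gsz g ->
  groot h < gsz h -> b < gsz h -> b != groot h -> gv i a != gv j b.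
Proof.
move=> g h ij rn an rn' bn br.
have [kb [-> _]] := gv_some rn' bn br.
case: (eqVneq a (groot g)) => [->|ar]; first by rewrite gv_root.
have [ka [-> _]] := gv_some rn an ar.
apply/eqP => /(congr1 (fun x : gadgets_vert L => if x is Some u then val (tag u) else 0)) /= /val_inj eij.
by rewrite eij eqxx in ij.
Qed.

Lemma sound L vS ch :
  (forall i : 'I_(size L), lcheck (nth (0,0) L i) (ch (nth (0,0) L i)) vS
      [exists j : 'I_(size L), (j != i) && adjv (nth (0,0) L j) (ch (nth (0,0) L j))]) ->
  [|| vS, [exists i : 'I_(size L), adjv (nth (0,0) L i) (ch (nth (0,0) L i))]
      | [exists i : 'I_(size L), exists j : 'I_(size L),
          [&& i != j, wit (nth (0,0) L i) (ch (nth (0,0) L i)) & wit (nth (0,0) L j) (ch (nth (0,0) L j))]]] ->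
  disj_domb (gadgets_adj L) (Sset L vS ch).
Proof.
move=> H1 H2; apply/forallP => x; apply/implyP => xS.
case: x xS => [u|] xS.
  rewrite -(gv_bump u) in xS *.
  set i := tag u in xS *; set g := nth (0,0) L i in xS *.
  set a := bump (groot g) (tagged u) in xS *.
  have := H1 i; case/and5P => rn irr uq vld chk.
  have an : a < gsz g by apply: bump_lt.
  have ar : a != groot g by rewrite eq_sym neq_bump.
  have irr' : ~~ gedge g (groot g) (groot g).
    by move/allP: irr => /(_ (groot g)); rewrite mem_iota add0n rn => /(_ isT).
  rewrite gv_inS // (negbTE ar) in xS.
  move/allP: chk => /(_ a); rewrite mem_iota add0n an => /(_ isT).
  rewrite (negbTE ar) (negbTE xS) /=.
  case/or4P => [/hasP[y yL ay] | /andP[vs ar'] | c2 | /and3P[ext ear c1]].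
  - apply/orP; left; apply/existsP; exists (gv i y).
    case/andP: (allP vld y yL) => yn yr.
    by rewrite gv_inS // (negbTE yr) yL /= gv_adj.
  - apply/orP; left; apply/existsP; exists (gv i (groot g)).
    by rewrite gv_inS // eqxx vs /= gv_adj.
  - apply/orP; right.
    have [y1 [y2 [/and3P[y1n s1 d1] /and3P[y2n s2 d2] ne]]] := loc_wit2 rn vld uq c2.
    apply/card_gt1P; exists (gv i y1), (gv i y2); split.
    + by rewrite inE gv_inS // s1 gv_dist2.
    + by rewrite inE gv_inS // s2 gv_dist2.
    + exact: gv_inj.
  - apply/orP; right.
    have [y /and3P[yn s1 d1]] := loc_wit1 rn vld c1.
    case/existsP: ext => j /andP[ji /hasP[b bL eb]].
    have := H1 j; case/and5P => rn' _ _ vld' _.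
    case/andP: (allP vld' b bL) => bn br.
    apply/card_gt1P; exists (gv i y), (gv j b); split.
    + by rewrite inE gv_inS // s1 gv_dist2.
    + rewrite inE gv_inS // (negbTE br) bL /=.
      by apply: gv_cross => //; rewrite eq_sym.
    + by apply: gv_tagdiff => //; rewrite eq_sym.
rewrite inE in xS; rewrite (negbTE xS) /= in H2.
case/orP: H2 => [/existsP[i /hasP[y yL ey]] | /existsP[i /existsP[j /and3P[ij /hasP[y yL dy] /hasP[b bL db]]]]].
  have := H1 i; case/and5P => rn irr uq vld _.
  have irr' : ~~ gedge (nth (0,0) L i) (groot (nth (0,0) L i)) (groot (nth (0,0) L i)).
    by move/allP: irr => /(_ (groot (nth (0,0) L i))); rewrite mem_iota add0n rn => /(_ isT).
  case/andP: (allP vld y yL) => yn yr.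
  apply/orP; left; apply/existsP; exists (gv i y).
  by rewrite -[X in gadgets_adj L X](gv_root i) gv_adj // gv_inS // (negbTE yr) yL.
have := H1 i; case/and5P => rn irr uq vld _.
have irr' : ~~ gedge (nth (0,0) L i) (groot (nth (0,0) L i)) (groot (nth (0,0) L i)).
  by move/allP: irr => /(_ (groot (nth (0,0) L i))); rewrite mem_iota add0n rn => /(_ isT).
have := H1 j; case/and5P => rn' irr2 _ vld' _.
have irr2' : ~~ gedge (nth (0,0) L j) (groot (nth (0,0) L j)) (groot (nth (0,0) L j)).
  by move/allP: irr2 => /(_ (groot (nth (0,0) L j))); rewrite mem_iota add0n rn' => /(_ isT).
case/andP: (allP vld y yL) => yn yr.
case/andP: (allP vld' b bL) => bn br.
apply/orP; right; apply/card_gt1P; exists (gv i y), (gv j b); split.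
- by rewrite inE gv_inS // (negbTE yr) yL /= -(gv_root i) gv_dist2.
- by rewrite inE gv_inS // (negbTE br) bL /= -(gv_root j) gv_dist2.
- exact: gv_tagdiff.
Qed.

Lemma card_T L : #|[set: gadgets_vert L]| = 1 + \sum_(i < size L) (gsz (nth (0,0) L i)).-1.
Proof.
rewrite cardsT card_option card_tagged sumnE big_map big_enum /= add1n.
by congr _.+1; apply: eq_bigr => i _; rewrite card_ord.
Qed.

Lemma card_S L vS ch : #|Sset L vS ch| <= vS + \sum_(i < size L) size (ch (nth (0,0) L i)).
Proof.
pose sl := (if vS then [:: None] else [::]) ++
   flatten [seq map (@gv L i) (ch (nth (0,0) L i)) | i <- enum 'I_(size L)].
have sub : {subset Sset L vS ch <= sl}.
  move=> x; rewrite inE; case: x => [u|] xS; rewrite mem_cat.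
    apply/orP; right; apply/flatten_mapP; exists (tag u); first by rewrite mem_enum.
    by rewrite -(gv_bump u) map_f.
  by rewrite xS mem_head.
have c1 : #|Sset L vS ch| <= #|sl| by apply/subset_leq_card/subsetP.
apply: (leq_trans c1).
apply: (leq_trans (card_size sl)).
rewrite size_cat size_flatten /shape -map_comp sumnE big_map big_enum /=.
rewrite leq_add //; first by rewrite /sl; case: (vS).
by apply: leq_sum => i _; rewrite size_map.
Qed.

Lemma gamma_le L S : disj_domb (gadgets_adj L) S -> gamma_d2 (gadgets_adj L) <= #|S|.
Proof.
move=> dS; rewrite /gamma_d2.
have : S \in index_enum {set gadgets_vert L} by rewrite mem_index_enum.
elim: (index_enum _) => // j r IH; rewrite inE big_cons; case/orP => [/eqP<-|jr].
  by rewrite dS geq_minl.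
by case: (disj_domb _ j); rewrite ?geq_min IH ?orbT.
Qed.

Lemma final L vS ch :
  (forall i : 'I_(size L), lcheck (nth (0,0) L i) (ch (nth (0,0) L i)) vS
      [exists j : 'I_(size L), (j != i) && adjv (nth (0,0) L j) (ch (nth (0,0) L j))]) ->
  [|| vS, [exists i : 'I_(size L), adjv (nth (0,0) L i) (ch (nth (0,0) L i))]
      | [exists i : 'I_(size L), exists j : 'I_(size L),
          [&& i != j, wit (nth (0,0) L i) (ch (nth (0,0) L i)) & wit (nth (0,0) L j) (ch (nth (0,0) L j))]]] ->
  3 * (vS + \sum_(i < size L) size (ch (nth (0,0) L i))) <= 1 + \sum_(i < size L) (gsz (nth (0,0) L i)).-1 ->
  3 * gamma_d2 (gadgets_adj L) <= #|[set: gadgets_vert L]|.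
Proof.
move=> H1 H2 H3; rewrite card_T; apply: leq_trans H3.
by rewrite leq_mul2l /=; apply: leq_trans (card_S _ _ _); apply: gamma_le; apply: sound.
Qed.

Lemma mem12 g : in_D1 g || in_D2 g -> g \in all12.
Proof.
case: g => s t; rewrite /in_D1 /in_D2 /=.
case/orP => [/andP[/andP[s3 s5] /andP[t1 t3]] | /andP[/andP[s3 s5] /eqP->]].
  have: s \in [:: 3; 4; 5] by rewrite !inE; lia.
  have: t \in [:: 1; 2; 3] by rewrite !inE; lia.
  by rewrite !inE => /or3P[]/eqP-> /or3P[]/eqP->.
have: s \in [:: 3; 4; 5] by rewrite !inE; lia.
by rewrite !inE => /or3P[]/eqP->.
Qed.

Lemma factP : all (fun g => lcheck g (chP g) true false && (3 * size (chP g) <= mm g)) all12.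
Proof. by vm_compute. Qed.

Lemma factQ : all (fun g => (dP g <= 1) ==>
   [&& lcheck g (chQ g) false true, 3 * size (chQ g) <= mm g & adjv g (chQ g) || (dP g == 1)]) all12.
Proof. by vm_compute. Qed.

Lemma factPair : all (fun g1 => all (fun g2 => [|| perm_eq [:: g1; g2] G4_list, perm_eq [:: g1; g2] G5_list,
   ok2 true chP g1 g2, ok2 false chQ g1 g2 | ok2 false chR g1 g2]) all12) all12.
Proof. by vm_compute. Qed.

Lemma sound2 vS ch g1 g2 : ok2 vS ch g1 g2 ->
  3 * gamma_d2 (gadgets_adj [:: g1; g2]) <= #|[set: gadgets_vert [:: g1; g2]]|.
Proof.
case/and4P => c1 c2 c3 c4; apply: (@final [:: g1; g2] vS ch).
- case=> [[|[|//]]] Hi /=.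
    apply: (lcheck_mono c1) => a2; apply/existsP; exists (Ordinal (isT : 1 < 2)); exact: a2.
  apply: (lcheck_mono c2) => a1; apply/existsP; exists (Ordinal (isT : 0 < 2)); exact: a1.
- case/orP: c3 => [/orP[/orP[vs|a1]|a2]|/andP[w1 w2]].
  + by rewrite vs.
  + by apply/or3P; apply: Or32; apply/existsP; exists (Ordinal (isT : 0 < 2)).
  + by apply/or3P; apply: Or32; apply/existsP; exists (Ordinal (isT : 1 < 2)).
  apply/or3P; apply: Or33; apply/existsP; exists (Ordinal (isT : 0 < 2)).
  by apply/existsP; exists (Ordinal (isT : 1 < 2)); rewrite /= w1 w2.
- by rewrite !big_ord_recr !big_ord0 /=; move: c4; rewrite /mm !addnA.
Qed.

Lemma sum_two n (F : 'I_n -> nat) (j k : 'I_n) : j != k -> F j + F k <= \sum_i F i.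
Proof.
move=> jk; rewrite (bigD1 j) //= (bigD1 k) /=; last by rewrite eq_sym jk.
by rewrite addnA leq_addr.
Qed.

Lemma le_sum1 n (F : 'I_n -> nat) (j : 'I_n) : F j <= \sum_i F i.
Proof. by rewrite (bigD1 j) //= leq_addr. Qed.

Lemma two_others n (i : 'I_n) : 2 < n -> exists j k : 'I_n, [/\ j != i, k != i & j != k].
Proof.
move=> n3.
have o0 : 0 < n by lia. have o1 : 1 < n by lia.
pose a := Ordinal o0; pose b := Ordinal o1; pose c := Ordinal n3.
have ab : a != b by []. have ac : a != c by []. have bc : b != c by [].
case: (eqVneq i a) => [->|ia].
  by exists b, c; split => //; rewrite eq_sym.
case: (eqVneq i b) => [->|ib].
  by exists a, c; split => //; rewrite eq_sym.
by exists a, b; split => //; rewrite eq_sym.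
Qed.

Unset Implicit Arguments.
Theorem lemma2p4 (L : seq (nat * nat)) :
  F_list L -> ~~ perm_eq L G4_list -> ~~ perm_eq L G5_list ->
  3 * gamma_d2 (gadgets_adj L) <= #|[set: gadgets_vert L]|.
Proof.
case/andP => /allP allv sz nG4 nG5.
have v12 (i : 'I_(size L)) : nth (0,0) L i \in all12.
  by apply: mem12; apply: allv; apply: mem_nth.
case: (ltngtP (size L) 2) => [|sz3|sz2]; first by rewrite ltnNge sz.
  case: (leqP 2 (\sum_(i < size L) dP (nth (0,0) L i))) => hd.
    have hP (i : 'I_(size L)) := andP (allP factP _ (v12 i)).
    apply: (@final L true chP).
    - by move=> i; apply: (lcheck_mono (hP i).1).
    - by [].
    have e (i : 'I_(size L)) : (gsz (nth (0,0) L i)).-1 = 3 * size (chP (nth (0,0) L i)) + dP (nth (0,0) L i).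
      by rewrite /dP subnKC //; exact: (hP i).2.
    rewrite (eq_bigr _ (fun i _ => e i)) big_split /= -big_distrr /=.
    by rewrite mulnDr muln1 addnC [in X in _ <= X]addnCA leq_add2l add1n ltnS.
  have d1 (i : 'I_(size L)) : dP (nth (0,0) L i) <= 1.
    by rewrite -ltnS; exact: leq_ltn_trans (le_sum1 (fun i => dP (nth (0,0) L i)) i) hd.
  have hQ (i : 'I_(size L)) : [/\ lcheck (nth (0,0) L i) (chQ (nth (0,0) L i)) false true,
       3 * size (chQ (nth (0,0) L i)) <= mm (nth (0,0) L i) &
       adjv (nth (0,0) L i) (chQ (nth (0,0) L i)) || (dP (nth (0,0) L i) == 1)].
    by apply/and3P; exact: (implyP (allP factQ _ (v12 i)) (d1 i)).
  have ext (i : 'I_(size L)) : [exists j : 'I_(size L), (j != i) && adjv (nth (0,0) L j) (chQ (nth (0,0) L j))].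
    apply: contraT => /existsPn nj.
    have [j [k [ji ki jk]]] := two_others i sz3.
    have dj : dP (nth (0,0) L j) = 1.
      by case: (hQ j) => _ _ /orP[a|/eqP //]; move: (nj j); rewrite ji a.
    have dk : dP (nth (0,0) L k) = 1.
      by case: (hQ k) => _ _ /orP[a|/eqP //]; move: (nj k); rewrite ki a.
    have := sum_two (fun i => dP (nth (0,0) L i)) jk; rewrite /= dj dk => h.
    by have := leq_ltn_trans h hd.
  have o0 : 0 < size L by lia.
  apply: (@final L false chQ).
  - move=> i; case: (hQ i) => c _ _; exact: (lcheck_mono c).
  - case/existsP: (ext (Ordinal o0)) => j /andP[_ a].
    by apply/or3P; apply: Or32; apply/existsP; exists j.
  rewrite add0n big_distrr /=; apply: leq_trans (leqnSn _); apply: leq_sum => i _.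
  by case: (hQ i) => _ ->.
case: L allv sz nG4 nG5 v12 sz2 => [|g1 [|g2 [|]]] //= allv _ nG4 nG5 v12 _.
have m1 : g1 \in all12 by apply: mem12; apply: allv; rewrite mem_head.
have m2 : g2 \in all12 by apply: mem12; apply: allv; rewrite !inE eqxx orbT.
move: (allP (allP factPair _ m1) _ m2).
rewrite (negbTE nG4) (negbTE nG5) /=.
by case/or3P => /sound2.
Qed.
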